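(* For any trace-free statistical structure $(g,\nabla)$ on $M$ and any $g$-orthonormal frame $e_1,\dots,e_n$ at a point, $$\sum_{i,j=1}^n\nabla^2g(e_i,e_i,e_j,e_j)=g(\nabla g,\nabla g).$$
   Context: A statistical structure is a pair $(g,\nabla)$, $g$ a positive definite Riemannian metric, $\nabla$ torsion-free with $(\nabla_X g)(Y,Z)=(\nabla_Y g)(X,Z)$; it is trace-free if $\nabla\nu_g=0$ ($\nu_g$ the Riemannian volume form). Here $\nabla g(X,Y,Z)=(\nabla_Xg)(Y,Z)$, $\nabla^2g(X,Y,Z,W)=(\nabla_X(\nabla g))(Y,Z,W)$, and $g(\nabla g,\nabla g)=\sum_{i,j,k}\nabla g(e_i,e_j,e_k)^2$. *)

(* Defs.v *)
(* Local-coordinate formulation of statistical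
   structures on an open subset U of R^n (points are row vectors 'rV[R]_n). *)
From HB Require Import structures.
From mathcomp Require Import all_boot all_order all_algebra.
From mathcomp Require Import all_classical all_reals all_analysis.
Set Implicit Arguments. Unset Strict Implicit. Unset Printing Implicit Defensive.
Import Order.TTheory GRing.Theory Num.Theory.
Import numFieldNormedType.Exports.
Local Open Scope ring_scope.

Section StatDefs.
Variables (R : realType) (n : nat).

Definition ebasis (a : 'I_n) : 'rV[R]_n := delta_mx 0 a.

Definition pd (f : 'rV[R]_n -> R) (a : 'I_n) (x : 'rV[R]_n) : R :=
  derive f x (ebasis a).

(* Metric components g_{ij}(x) : G i j x.
   Connection coefficients: nabla_{d_i} d_j = sum_k Gam k i j * d_k. *)
Definition metric_at (G : 'I_n -> 'I_n -> 'rV[R]_n -> R) (x : 'rV[R]_n)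
  : 'M[R]_n := \matrix_(i, j) G i j x.

Definition gform (G : 'I_n -> 'I_n -> 'rV[R]_n -> R) x (v w : 'rV[R]_n) : R := (v *m metric_at G x *m w^T) 0 0.

Definition nablag (G : 'I_n -> 'I_n -> 'rV[R]_n -> R)
  (Gam : 'I_n -> 'I_n -> 'I_n -> 'rV[R]_n -> R) (a b c : 'I_n) (x : 'rV[R]_n) : R :=
  pd (G b c) a x - \sum_k Gam k a b x * G k c x - \sum_k Gam k a c x * G b k x.

Definition nabla2g (G : 'I_n -> 'I_n -> 'rV[R]_n -> R)
  (Gam : 'I_n -> 'I_n -> 'I_n -> 'rV[R]_n -> R) (m a b c : 'I_n) (x : 'rV[R]_n) : R :=
  pd (nablag G Gam a b c) m x
  - \sum_k Gam k m a x * nablag G Gam k b c x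
  - \sum_k Gam k m b x * nablag G Gam a k c x
  - \sum_k Gam k m c x * nablag G Gam a b k x.

Definition nablag_ev (G : 'I_n -> 'I_n -> 'rV[R]_n -> R)
  (Gam : 'I_n -> 'I_n -> 'I_n -> 'rV[R]_n -> R) x (X Y Z : 'rV[R]_n) : R :=
  \sum_a \sum_b \sum_c X 0 a * Y 0 b * Z 0 c * nablag G Gam a b c x.

Definition nabla2g_ev (G : 'I_n -> 'I_n -> 'rV[R]_n -> R)
  (Gam : 'I_n -> 'I_n -> 'I_n -> 'rV[R]_n -> R) x (X Y Z W : 'rV[R]_n) : R :=
  \sum_m \sum_a \sum_b \sum_c
    X 0 m * Y 0 a * Z 0 b * W 0 c * nabla2g G Gam m a b c x.

(* coefficient of the Riemannian volume form: nu_g = volc * dx^1 /\ ... /\ dx^n *)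
Definition volc (G : 'I_n -> 'I_n -> 'rV[R]_n -> R) (x : 'rV[R]_n) : R := Num.sqrt (\det (metric_at G x)).

(* (nabla_{d_a} nu_g)(d_1,...,d_n)
   = d_a (nu_g(d_1..d_n)) - sum_i nu_g(d_1,..,nabla_{d_a} d_i,..,d_n) *)
Definition nabla_vol (G : 'I_n -> 'I_n -> 'rV[R]_n -> R)
  (Gam : 'I_n -> 'I_n -> 'I_n -> 'rV[R]_n -> R) (a : 'I_n) (x : 'rV[R]_n) : R :=
  pd (volc G) a x - (\sum_i Gam i a i x) * volc G x.

Definition statistical_structure (U : set 'rV[R]_n) (G : 'I_n -> 'I_n -> 'rV[R]_n -> R)
  (Gam : 'I_n -> 'I_n -> 'I_n -> 'rV[R]_n -> R) : Prop :=
  [/\ (forall x, U x -> forall i j, G i j x = G j i x),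
      (forall x, U x -> forall v : 'rV[R]_n, v != 0 -> 0 < gform G x v v),
      (forall x, U x -> forall k i j, Gam k i j x = Gam k j i x) &
      (forall x, U x -> forall a b c, nablag G Gam a b c x = nablag G Gam b a c x)].

Definition trace_free (U : set 'rV[R]_n) (G : 'I_n -> 'I_n -> 'rV[R]_n -> R)
  (Gam : 'I_n -> 'I_n -> 'I_n -> 'rV[R]_n -> R) : Prop :=
  forall x, U x -> forall a, nabla_vol G Gam a x = 0.

(* differentiability assumed (implied by smoothness) *)
Definition regular (U : set 'rV[R]_n) (G : 'I_n -> 'I_n -> 'rV[R]_n -> R)
  (Gam : 'I_n -> 'I_n -> 'I_n -> 'rV[R]_n -> R) : Prop :=
  [/\ (forall x, U x -> forall a i j, derivable (G i j) x (ebasis a)),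
      (forall x, U x -> forall a b i j,
          derivable (fun y => pd (G i j) b y) x (ebasis a)) &
      (forall x, U x -> forall a k i j, derivable (Gam k i j) x (ebasis a))].

Definition orthonormal_frame (G : 'I_n -> 'I_n -> 'rV[R]_n -> R) (x : 'rV[R]_n) (E : 'I_n -> 'rV[R]_n) : Prop :=
  forall i j, gform G x (E i) (E j) = (i == j)%:R.

End StatDefs.

(* Main.v *)
Require Import Defs.
From HB Require Import structures.
From mathcomp Require Import all_boot all_order all_algebra.
From mathcomp Require Import all_classical all_reals all_analysis.
From mathcomp Require Import fingroup perm.
From mathcomp Require Import ring lra.
Import Order.TTheory GRing.Theory Num.Theory.
Import numFieldNormedType.Exports.
Local Open Scope ring_scope.

Section A.
Variables (R : realType) (V : normedModType R).

Lemma is_derive_sumP (I : Type) (r : seq I) (P : pred I) (f : I -> V -> R)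
  (df : I -> R) x v :
  (forall i, P i -> is_derive x v (f i) (df i)) ->
  is_derive x v (fun y => \sum_(i <- r | P i) f i y) (\sum_(i <- r | P i) df i).
Proof.
move=> H; rewrite -fct_sumE.
elim/big_ind2 : _ => //; last first.
  by move=> f1 d1 f2 d2 h1 h2; exact: is_deriveD.
exact: is_derive_cst.
Qed.

Lemma is_derive_prodP (I : eqType) (r : seq I) (f : I -> V -> R)
  (df : I -> R) x v : uniq r ->
  (forall i, is_derive x v (f i) (df i)) ->
  is_derive x v (fun y => \prod_(i <- r) f i y)
    (\sum_(j <- r) \prod_(i <- r) (if i == j then df i else f i x)).
Proof.
move=> ur H; elim: r ur => [|a r IH] /=.
  move=> _; rewrite big_nil.
  rewrite (_ : (fun y => _) = cst 1); first exact: is_derive_cst.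
  by apply/funext => y; rewrite big_nil.
move=> /andP[anr ur].
rewrite (_ : (fun y => _) = f a * (fun y => \prod_(i <- r) f i y)); last first.
  by apply/funext => y; rewrite big_cons.
apply: is_derive_eq.
  by apply: is_deriveM; exact: IH.
rewrite /=.

rewrite big_cons big_cons eqxx.
have -> : \prod_(i <- r) (if i == a then df i else f i x) = \prod_(i <- r) f i x.
  rewrite big_seq [RHS]big_seq; apply: eq_bigr => i ir.
  by case: eqP => // ia; move: anr; rewrite -ia ir.
rewrite addrC; congr (_ + _); first exact: mulrC.
rewrite -[_ *: _]/(_ * _) big_distrr /= big_seq [RHS]big_seq.
apply: eq_bigr => j jr; rewrite big_cons.
by case: eqP => // aj; move: anr; rewrite aj jr.
Qed.

Lemma is_derive_det k (M : V -> 'M[R]_k) x v :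
  (forall i j, derivable (fun y => M y i j) x v) ->
  is_derive x v (fun y => \det (M y))
    (\sum_i \sum_j 'D_v (fun y => M y i j) x * cofactor (M x) i j).
Proof.
move=> H.
pose DM := \matrix_(i, j) 'D_v (fun y => M y i j) x.
pose B (j : 'I_k) := \matrix_(i, l) (if i == j then DM i l else M x i l).
apply: (@is_derive_eq _ _ _ _ _ _ _ (\sum_(s : 'S_k) (-1) ^+ s *
   \sum_(j <- index_enum 'I_k) \prod_(i <- index_enum 'I_k)
      (if i == j then DM i (s i) else M x i (s i)))).
  rewrite /determinant.
  apply: is_derive_sumP => s _.
  rewrite (_ : (fun y => _) = (cst ((-1) ^+ s : R)) * (fun y => \prod_i M y i (s i))); last first.
    by apply/funext.
  apply: is_derive_eq.
    apply: is_deriveM.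
    apply: is_derive_prodP; first exact: index_enum_uniq.
    move=> i; apply: derivableP; exact: H.
  rewrite scaler0 addr0 -[_ *: _]/(_ * _) /=.
  congr (_ * _).
  by rewrite /DM; under [RHS]eq_bigr do under eq_bigr do rewrite mxE.
under eq_bigr do rewrite big_distrr /=.
rewrite exchange_big /=; apply: eq_bigr => j _.
transitivity (\det (B j)).
  rewrite /determinant; apply: eq_bigr => s _.
  by congr (_ * _); under [RHS]eq_bigr do rewrite /B mxE.
rewrite (expand_det_row (B j) j); apply: eq_bigr => l _.
rewrite /B mxE eqxx /DM mxE; congr (_ * _).
rewrite /cofactor; congr (_ * _); apply: congr1.
apply/matrixP => i1 i2; rewrite !mxE.
by rewrite eq_sym (negbTE (neq_lift _ _)).
Qed.

End A.
Section A2.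
Variables (R : realType) (V : normedModType R).

Lemma deriveE1 (g : V -> R) x v :
  'D_v g x = 'D_1 (fun h : R => g (h *: v + x)) 0.
Proof.
rewrite /derive; congr (lim (_ @ 0^'))%classic; apply/funext => h /=.
by rewrite scale0r add0r addr0 [h%:A]mulr1.
Qed.

Lemma derive_sqrt_comp (f : V -> R) x v : 0 < f x -> derivable f x v ->
  'D_v (fun y => Num.sqrt (f y)) x = 'D_v f x / (2 * Num.sqrt (f x)).
Proof.
move=> fx0 df.
rewrite !deriveE1.
have dphi := (derivable1P _ _ _).1 df.
have e0 : (fun h : R => f (h *: v + x)) 0 = f x by rewrite /= scale0r add0r.
have ds : derivable Num.sqrt ((fun h : R => f (h *: v + x)) 0) 1.
  by rewrite e0; case: (is_derive1_sqrt fx0).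
have := derive1_comp dphi ds.
rewrite !derive1E /= => ->.
rewrite e0 derive_sqrt // mulrC.
by [].
Qed.

End A2.
Section B.
Variables (R : realType).

Lemma sqsum_gt0 k (w : 'rV[R]_k) : w != 0 -> 0 < (w *m w^T) 0 0.
Proof.
move=> wn0; rewrite mxE.
under eq_bigr do rewrite mxE -expr2.
rewrite lt_neqAle sumr_ge0 ?andbT; last by move=> i _; exact: sqr_ge0.
apply/eqP => /esym/psumr_eq0P H.
move/eqP: wn0; apply; apply/matrixP => i j.
rewrite mxE (ord1 i).
have := H (fun i _ => sqr_ge0 _) j isT => /eqP.
by rewrite sqrf_eq0 => /eqP.
Qed.

Lemma pd_det_gt0 k (A : 'M[R]_k) :
  (forall w : 'rV[R]_k, w != 0 -> 0 < (w *m A *m w^T) 0 0) -> 0 < \det A.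
Proof.
move=> HA.
pose B (t : R) := (1 - t)%:M + t *: A.
have nz t : 0 <= t <= 1 -> \det (B t) != 0.
  move=> /andP[t0 t1]; apply/negP => /det0P [w wn0 wB].
  have : (w *m B t *m w^T) 0 0 = 0 by rewrite wB mul0mx mxE.
  rewrite /B mulmxDr mulmxDl mul_mx_scalar -scalemxAr -!scalemxAl.
  have h1 := @sqsum_gt0 _ _ wn0; have h2 := HA _ wn0.
  move: h1 h2; move: (w *m w^T) (w *m A *m w^T) => a b h1 h2.
  rewrite !mxE.
  move: t1; rewrite le_eqVlt => /orP[/eqP t1|t1].
    by rewrite t1 subrr mul0r add0r mul1r => /eqP; rewrite gt_eqF.
  move/eqP; rewrite gt_eqF //.
  apply: ltr_pwDl; first by rewrite mulr_gt0 // subr_gt0.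
  by rewrite mulr_ge0 // ltW.
pose Mp : 'M[{poly R}]_k := \matrix_(i, j) ((i == j)%:R%:P + 'X * (A i j - (i == j)%:R)%:P).
have ev t : (\det Mp).[t] = \det (B t).
  rewrite -horner_evalE -det_map_mx; congr (\det _).
  apply/matrixP => i j; rewrite !mxE.
  rewrite -[LHS]/((((i == j)%:R)%:P + 'X * (A i j - (i == j)%:R)%:P).[t]) !hornerE.
  by case: eqP => _ /=; rewrite ?mulr1n ?mulr0n; lra.
rewrite ltNge; apply/negP => dA.
have [c c01 pc] : exists2 c, c \in `[0, 1] & horner (\det Mp) c = 0.
  apply: IVT => //.
    by apply: continuous_subspaceT => x; exact: continuous_horner.
  rewrite /= !ev /B subr0 scale0r addr0 det1 subrr scale1r.
  rewrite (_ : 0%:M = 0); last by apply/matrixP => i j; rewrite !mxE mul0rn.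
  rewrite add0r; apply/andP; split; [by rewrite ge_min dA orbT | by rewrite le_max ler01].
have c01' : 0 <= c <= 1 by move: c01; rewrite in_itv.
by have := nz c c01'; rewrite -ev pc eqxx.
Qed.

End B.
Section Main.
Variables (R : realType) (n : nat) (U : set 'rV[R]_n)
  (G : 'I_n -> 'I_n -> 'rV[R]_n -> R)
  (Gam : 'I_n -> 'I_n -> 'I_n -> 'rV[R]_n -> R).

Definition gm x := metric_at G x.
Definition Gmat a x : 'M[R]_n := \matrix_(k, b) Gam k a b x.
Definition DGmat a x : 'M[R]_n := \matrix_(b, c) pd (G b c) a x.
Definition Cmat a x : 'M[R]_n := \matrix_(b, c) nablag G Gam a b c x.

Lemma Cmat_eq a x :
  Cmat a x = DGmat a x - (Gmat a x)^T *m gm x - gm x *m Gmat a x.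
Proof.
apply/matrixP => b c; rewrite !mxE /nablag; congr (_ - _ - _);
  apply: eq_bigr => k _; by rewrite !mxE // mulrC.
Qed.

Lemma tr_mul2 (X Y : 'M[R]_n) : \tr (X *m Y) = \sum_b \sum_c X b c * Y c b.
Proof. by rewrite /mxtrace; apply: eq_bigr => b _; rewrite mxE. Qed.

Lemma gm_entry i j : (fun y => gm y i j) = G i j.
Proof. by apply/funext => y; rewrite /gm /metric_at mxE. Qed.

Lemma step1 x a : regular U G Gam -> statistical_structure U G Gam ->
  trace_free U G Gam -> U x -> \tr (Cmat a x *m \adj (gm x)) = 0.
Proof.
case=> [dG _ _] [Gsym Gpd _ _] tf Ux.
have d0 : 0 < \det (gm x) by apply: pd_det_gt0 => w wn0; exact: Gpd.
have hdet := @is_derive_det _ _ _ gm x (ebasis R a)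
  (fun i j => eq_ind_r (fun f => derivable f x _) (dG x Ux a i j) (gm_entry i j)).
have tfa := tf x Ux a.
rewrite /nabla_vol /pd /volc in tfa.
rewrite (@derive_sqrt_comp _ _ (fun y => \det (metric_at G y))) in tfa; last 2 first.
- exact: d0.
- by case: hdet.
have E : 'D_(ebasis R a) (fun y => \det (metric_at G y)) x = 'D_(ebasis R a) (fun y => \det (gm y)) x by [].
rewrite E (derive_val (is_derive := hdet)) -/(gm x) in tfa.
have Dd : \sum_i \sum_j 'D_(ebasis R a) (fun y => gm y i j) x * cofactor (gm x) i j
  = \tr (DGmat a x *m \adj (gm x)).
  rewrite tr_mul2; apply: eq_bigr => i _; apply: eq_bigr => j _.
  by rewrite gm_entry !mxE.
rewrite Dd in tfa.
have trG : \tr (Gmat a x) = \sum_i Gam i a i x.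
  by rewrite /mxtrace; apply: eq_bigr => i _; rewrite mxE.
rewrite -trG in tfa.
rewrite Cmat_eq !mulmxBl !raddfB /=. rewrite -(mulmxA ((Gmat a x)^T)) mul_mx_adj mul_mx_scalar mxtraceZ mxtrace_tr.
rewrite -(mulmxA (gm x)) (mxtrace_mulC (gm x)) -(mulmxA (Gmat a x)) mul_adj_mx mul_mx_scalar mxtraceZ.
move: tfa; set D := \tr (DGmat a x *m _); set S := \tr (Gmat a x).
set d := \det (gm x) in d0 *.
have s0 : 0 < Num.sqrt d by rewrite sqrtr_gt0.
move=> /eqP; rewrite subr_eq0 => /eqP H.
have -> : D = (D / (2 * Num.sqrt d)) * (2 * Num.sqrt d).
  by rewrite divfK // mulf_neq0 // gt_eqF.
have sq : Num.sqrt d * Num.sqrt d = d by rewrite -expr2 sqr_sqrtr // ltW.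
rewrite H; move: sq; set s := Num.sqrt d => sq; rewrite -sq.
ring.
Qed.


Lemma derivable_sumP (I : Type) (r : seq I) (P : pred I) (f : I -> 'rV[R]_n -> R) x v :
  (forall i, P i -> derivable (f i) x v) ->
  derivable (fun y => \sum_(i <- r | P i) f i y) x v.
Proof.
move=> H; have := @is_derive_sumP R _ I r P f (fun i => 'D_v (f i) x) x v.
by case=> // i Pi; apply: derivableP; exact: H.
Qed.

Lemma derivable_mulP (f g : 'rV[R]_n -> R) x v :
  derivable f x v -> derivable g x v -> derivable (fun y => f y * g y) x v.
Proof. by move=> df dg; exact: (derivableM df dg). Qed.

Lemma nablag_derivable x m a b c : regular U G Gam -> U x ->
  derivable (nablag G Gam a b c) x (ebasis R m).
Proof.
case=> [dG dpG dGam] Ux.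
rewrite (_ : nablag G Gam a b c = (fun y => pd (G b c) a y)
   - (fun y => \sum_k Gam k a b y * G k c y) - (fun y => \sum_k Gam k a c y * G b k y));
  last by apply/funext.
apply: derivableB; first apply: derivableB.
- exact: dpG.
- by apply: derivable_sumP => k _; apply: derivable_mulP; [exact: dGam|exact: dG].
- by apply: derivable_sumP => k _; apply: derivable_mulP; [exact: dGam|exact: dG].
Qed.

Lemma adj_derivable x m c b : regular U G Gam -> U x ->
  derivable (fun y => \adj (gm y) c b) x (ebasis R m).
Proof.
case=> [dG _ _] Ux.
rewrite (_ : (fun y => _) = (fun y => (-1) ^+ (b + c) * \det (row' b (col' c (gm y)))));
  last by apply/funext => y; rewrite mxE.
apply: derivable_mulP; first exact: derivable_cst.
have := @is_derive_det R _ _ (fun y => row' b (col' c (gm y))) x (ebasis R m).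
case=> // i j.
rewrite (_ : (fun y => _) = G (lift b i) (lift c j)); first exact: dG.
by apply/funext => y; rewrite !mxE.
Qed.

Lemma derive_eq_val (f : 'rV[R]_n -> R) x v d1 d2 :
  is_derive x v f d1 -> is_derive x v f d2 -> d1 = d2.
Proof. by move=> [_ <-] [_ <-]. Qed.

Definition Kp m x : 'M[R]_n := \matrix_(c, b) 'D_(ebasis R m) (fun y => \adj (gm y) c b) x.
Definition DCmat m a x : 'M[R]_n := \matrix_(b, c) pd (nablag G Gam a b c) m x.

Lemma adj_deriv_id x m : regular U G Gam -> U x ->
  Kp m x *m gm x + \adj (gm x) *m DGmat m x
  = ('D_(ebasis R m) (fun y => \det (gm y)) x)%:M.
Proof.
move=> reg Ux; have [dG _ _] := reg.
apply/matrixP => c r.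
pose F := fun y => \sum_q \adj (gm y) c q * G q r y.
have h1 : is_derive x (ebasis R m) F
   (\sum_q (\adj (gm x) c q * 'D_(ebasis R m) (G q r) x
            + G q r x * 'D_(ebasis R m) (fun y => \adj (gm y) c q) x)).
  apply: is_derive_sumP => q _.
  apply: is_deriveM; apply: derivableP; [exact: adj_derivable | exact: dG].
have hdet := @is_derive_det _ _ _ gm x (ebasis R m)
  (fun i j => eq_ind_r (fun f => derivable f x _) (dG x Ux m i j) (gm_entry i j)).
have h2 : is_derive x (ebasis R m) F
   ('D_(ebasis R m) (fun y => \det (gm y)) x *+ (c == r)).
  rewrite (_ : F = fun y => \det (gm y) *+ (c == r)); last first.
    apply/funext => y; rewrite /F.
    have := congr1 (fun M : 'M[R]_n => M c r) (mul_adj_mx (gm y)); rewrite !mxE => <-.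
    rewrite /gm /metric_at; apply: eq_bigr => q _. by congr (_ * _); rewrite mxE.
  case: (c == r); last exact: is_derive_cst.
  by apply: derivableP; case: hdet.
rewrite !mxE -(derive_eq_val _ _ _ _ _ h1 h2) big_split /= addrC.
by congr (_ + _); apply: eq_bigr => q _; rewrite !mxE // mulrC.
Qed.


Lemma step2 x m a : open U -> regular U G Gam -> statistical_structure U G Gam ->
  trace_free U G Gam -> U x ->
  \tr (Cmat a x *m Kp m x) + \tr (DCmat m a x *m \adj (gm x)) = 0.
Proof.
move=> oU reg st tf Ux.
pose h := fun y => \sum_b \sum_c nablag G Gam a b c y * \adj (gm y) c b.
have h1 : is_derive x (ebasis R m) h
  (\sum_b \sum_c (nablag G Gam a b c x * 'D_(ebasis R m) (fun y => \adj (gm y) c b) x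
     + \adj (gm x) c b * 'D_(ebasis R m) (nablag G Gam a b c) x)).
  apply: is_derive_sumP => b _; apply: is_derive_sumP => c _.
  have d1 := derivableP (nablag_derivable x m a b c reg Ux).
  have d2 := derivableP (adj_derivable x m c b reg Ux).
  exact: (@is_deriveM R _ (nablag G Gam a b c) (fun y => \adj (gm y) c b) x (ebasis R m) _ _ d1 d2).
have h2 : is_derive x (ebasis R m) h 0.
  apply: (@near_eq_is_derive _ _ _ (cst 0) h x _ 0 _ (is_derive_cst _ _ _)).
  apply: filterS (oU x Ux) => y Uy.
  rewrite /cst; symmetry; transitivity (\tr (Cmat a y *m \adj (gm y))); last exact: step1.
  rewrite tr_mul2 /h.
  by apply: eq_bigr => b _; apply: eq_bigr => c _; rewrite [in RHS]mxE.
rewrite -(derive_eq_val _ _ _ _ _ h1 h2) !tr_mul2 -big_split /=.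
apply: eq_bigr => b _; rewrite -big_split /=; apply: eq_bigr => c _.
by rewrite !mxE [X in _ + X]mulrC.
Qed.


Lemma Cmat_sym x a : open U -> statistical_structure U G Gam -> U x ->
  (Cmat a x)^T = Cmat a x.
Proof.
move=> oU [Gsym _ _ _] Ux; apply/matrixP => b c; rewrite !mxE /nablag.
have -> : pd (G c b) a x = pd (G b c) a x.
  rewrite /pd; apply: near_eq_derive.
  by apply: filterS (oU x Ux) => y Uy; rewrite Gsym.
rewrite addrAC; congr (_ - _ - _); apply: eq_bigr => k _; by rewrite Gsym.
Qed.

Definition Nmat m a x : 'M[R]_n := \matrix_(b, c) nabla2g G Gam m a b c x.

Lemma Nmat_eq m a x : Nmat m a x = DCmat m a x - \sum_k (Gam k m a x *: Cmat k x)
  - (Gmat m x)^T *m Cmat a x - Cmat a x *m Gmat m x.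
Proof.
apply/matrixP => b c; rewrite !mxE /nabla2g summxE; congr (_ - _ - _ - _).
- by apply: eq_bigr => k _; rewrite !mxE.
- by apply: eq_bigr => k _; rewrite !mxE.
- by apply: eq_bigr => k _; rewrite !mxE mulrC.
Qed.


Lemma key x m a (P : 'M[R]_n) : open U -> regular U G Gam ->
  statistical_structure U G Gam -> trace_free U G Gam -> U x ->
  gm x *m P = 1%:M -> P *m gm x = 1%:M ->
  (forall a, \tr (Cmat a x *m P) = 0) ->
  \tr (Nmat m a x *m P) = \tr (Cmat m x *m P *m Cmat a x *m P).
Proof.
move=> oU reg st tf Ux AP PA trCP.
set A := gm x in AP PA.
have dn0 : \det A != 0.
  by apply/eqP => d0; have := congr1 determinant AP; rewrite det_mulmx d0 mul0r det1 => /eqP; rewrite eq_sym oner_eq0.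
have KdP : \adj A = \det A *: P.
  by rewrite -[LHS]mulmx1 -AP mulmxA mul_adj_mx mul_scalar_mx.
have s2 := step2 x m a oU reg st tf Ux.
have s3 := adj_deriv_id x m reg Ux.
set Dd := 'D_(ebasis R m) _ x in s3.
set Dg := DGmat m x in s3.
have Kpe : Kp m x = Dd *: P - \det A *: (P *m Dg *m P).
  rewrite -[Kp m x]mulmx1 -AP mulmxA.
  rewrite (_ : Kp m x *m gm x = Dd%:M - \adj (gm x) *m Dg); last by rewrite -s3 addrK.
  by rewrite mulmxBl mul_scalar_mx -/A KdP -!scalemxAl.
rewrite Kpe -/A KdP mulmxBr -!scalemxAr !raddfB /= !mxtraceZ trCP mulr0 sub0r in s2.
have DCP : \tr (DCmat m a x *m P) = \tr (Cmat a x *m (P *m Dg *m P)).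
  apply/eqP; rewrite -subr_eq0; apply/eqP.
  apply: (mulfI dn0); rewrite mulr0 mulrBr -s2; ring.
have Dge : Dg = Cmat m x + A *m Gmat m x + (Gmat m x)^T *m A.
  by rewrite /Dg Cmat_eq !subrK.
have e1 : P *m (A *m Gmat m x) *m P = Gmat m x *m P by rewrite mulmxA PA mul1mx.
have e2 : P *m ((Gmat m x)^T *m A) *m P = P *m (Gmat m x)^T.
  by rewrite mulmxA -(mulmxA (P *m (Gmat m x)^T)) AP mulmx1.
rewrite Dge !mulmxDr !mulmxDl e1 e2 !mulmxDr !raddfD /= in DCP.
rewrite Nmat_eq !mulmxBl !raddfB /= DCP.
have -> : \tr ((\sum_k Gam k m a x *: Cmat k x) *m P) = 0.
  rewrite mulmx_suml raddf_sum /= big1 // => k _.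
  by rewrite -scalemxAl mxtraceZ trCP mulr0.
have t1 : \tr (Cmat a x *m (P *m (Gmat m x)^T)) = \tr ((Gmat m x)^T *m Cmat a x *m P).
  by rewrite mulmxA mxtrace_mulC mulmxA.
have t2 : \tr (Cmat a x *m (Gmat m x *m P)) = \tr (Cmat a x *m Gmat m x *m P).
  by rewrite mulmxA.
have t3 : \tr (Cmat a x *m (P *m Cmat m x *m P)) = \tr (Cmat m x *m P *m Cmat a x *m P).
  by rewrite mxtrace_mulC -!mulmxA mxtrace_mulC -!mulmxA.
rewrite t1 t2 t3 subr0.
by rewrite !addrK.
Qed.

Lemma sum6 (F : 'I_n -> 'I_n -> 'I_n -> 'I_n -> 'I_n -> 'I_n -> R) :
  \sum_i \sum_j \sum_m \sum_a \sum_b \sum_c F i j m a b c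
  = \sum_m \sum_a \sum_b \sum_c \sum_i \sum_j F i j m a b c.
Proof.
under eq_bigr => i _ do rewrite exchange_big.
rewrite exchange_big.
under eq_bigr => m _ do under eq_bigr => i _ do rewrite exchange_big.
under eq_bigr => m _ do rewrite exchange_big.
under eq_bigr => m _ do under eq_bigr => a _ do under eq_bigr => i _ do rewrite exchange_big.
under eq_bigr => m _ do under eq_bigr => a _ do rewrite exchange_big.
under eq_bigr => m _ do under eq_bigr => a _ do under eq_bigr => b _ do under eq_bigr => i _ do rewrite exchange_big.
under eq_bigr => m _ do under eq_bigr => a _ do under eq_bigr => b _ do rewrite exchange_big.
by [].
Qed.

Lemma final p E : open U -> regular U G Gam -> statistical_structure U G Gam ->
  trace_free U G Gam -> U p -> orthonormal_frame G p E ->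
  \sum_i \sum_j nabla2g_ev G Gam p (E i) (E i) (E j) (E j)
  = \sum_i \sum_j \sum_k (nablag_ev G Gam p (E i) (E j) (E k)) ^+ 2.
Proof.
move=> oU reg st tf Up on.
pose A := gm p.
pose Em : 'M[R]_n := \matrix_(i, j) E i 0 j.
pose P := Em^T *m Em.
have hE : Em *m A *m Em^T = 1%:M.
  apply/matrixP => i j; rewrite [RHS]mxE -(on i j) /gform [RHS]mxE [LHS]mxE.
  apply: eq_bigr => l _; rewrite !mxE; congr (_ * _).
  by apply: eq_bigr => k _; rewrite !mxE.
have AP : A *m P = 1%:M.
  by rewrite /P mulmxA; apply: mulmx1C; rewrite mulmxA.
have PA : P *m A = 1%:M := mulmx1C AP.
have dn0 : \det A != 0.
  by apply/eqP => d0; have := congr1 determinant AP; rewrite det_mulmx d0 mul0r det1 => /eqP; rewrite eq_sym oner_eq0.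
have KdP : \adj A = \det A *: P.
  by rewrite -[LHS]mulmx1 -AP mulmxA mul_adj_mx mul_scalar_mx.
have trCP a : \tr (Cmat a p *m P) = 0.
  have := step1 p a reg st tf Up; rewrite -/A KdP -scalemxAr mxtraceZ.
  by move/eqP; rewrite mulf_eq0 (negbTE dn0) /= => /eqP.
pose T := \sum_m \sum_a P m a * \tr (Cmat m p *m P *m Cmat a p *m P).
transitivity T.
  rewrite /nabla2g_ev sum6; apply: eq_bigr => m _; apply: eq_bigr => a _.
  rewrite -(key p m a P oU reg st tf Up AP PA trCP) tr_mul2 big_distrr.
  apply: eq_bigr => b _; rewrite big_distrr; apply: eq_bigr => c _.
  rewrite !mxE big_distrl; apply: eq_bigr => i _.
  rewrite !big_distrr; apply: eq_bigr => j _; rewrite !mxE /=; ring.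
pose Y i := \sum_a E i 0 a *: Cmat a p.
have W i j k : nablag_ev G Gam p (E i) (E j) (E k) = (Em *m Y i *m Em^T) j k.
  rewrite /nablag_ev.
  under eq_bigr => a _ do rewrite exchange_big.
  rewrite exchange_big; under eq_bigr => c _ do rewrite exchange_big.
  rewrite mxE; apply: eq_bigr => c _; rewrite mxE mulr_suml; apply: eq_bigr => b _.
  rewrite !mxE summxE mulr_sumr mulr_suml; apply: eq_bigr => a _.
  by rewrite !mxE; ring.
have SQ (Z : 'M[R]_n) : \sum_j \sum_k (Z j k) ^+ 2 = \tr (Z *m Z^T).
  by rewrite tr_mul2; apply: eq_bigr => j _; apply: eq_bigr => k _; rewrite mxE expr2.
have Ysym i : (Y i)^T = Y i.
  have tZ (r : R) (X : 'M[R]_n) : (r *: X)^T = r *: X^T.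
    by apply/matrixP => ? ?; rewrite !mxE.
  rewrite /Y raddf_sum; apply: eq_bigr => a _.
  by rewrite -[LHS]/((E i 0 a *: Cmat a p)^T) tZ (Cmat_sym p a oU st Up).
have tr1 i : \tr (Em *m Y i *m Em^T *m (Em *m Y i *m Em^T)^T) = \tr (Y i *m P *m Y i *m P).
  rewrite !trmx_mul trmxK Ysym -!mulmxA mxtrace_mulC /P !mulmxA.
  by [].
have bil i : \tr (Y i *m P *m Y i *m P)
   = \sum_a \sum_m E i 0 a * E i 0 m * \tr (Cmat a p *m P *m Cmat m p *m P).
  rewrite /Y !mulmx_suml raddf_sum /=; apply: eq_bigr => a _.
  rewrite -!scalemxAl mxtraceZ mulmx_sumr mulmx_suml raddf_sum /= mulr_sumr.
  apply: eq_bigr => m _.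
  by rewrite -scalemxAr -scalemxAl mxtraceZ mulrA.
under eq_bigr => i _ do (under eq_bigr => j _ do under eq_bigr => k _ do rewrite W).
under eq_bigr => i _ do rewrite SQ tr1 bil.
rewrite exchange_big; under eq_bigr => a _ do rewrite exchange_big.
rewrite /T; apply: eq_bigr => a _; apply: eq_bigr => m _.
rewrite !mxE mulr_suml. apply: eq_bigr => i _; by rewrite !mxE.
Qed.

End Main.

Theorem proposition11p2 (R : realType) (n : nat) (U : set 'rV[R]_n)
  (G : 'I_n -> 'I_n -> 'rV[R]_n -> R)
  (Gam : 'I_n -> 'I_n -> 'I_n -> 'rV[R]_n -> R)
  (p : 'rV[R]_n) (E : 'I_n -> 'rV[R]_n) :
  open U -> regular U G Gam -> statistical_structure U G Gam ->
  trace_free U G Gam -> U p -> orthonormal_frame G p E ->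
  \sum_i \sum_j nabla2g_ev G Gam p (E i) (E i) (E j) (E j)
  = \sum_i \sum_j \sum_k (nablag_ev G Gam p (E i) (E j) (E k)) ^+ 2.
Proof. exact: final. Qed.
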